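(* Let $G$ be the non-abelian group of order $27$ and exponent $3$, and let $U_1$, $U_2$ be short $3$-sequences over $G$, neither of central type. Then: (a) if the terms of $U_1\cdot U_2$ lie in four distinct non-central $z$-classes, then $U_1\cdot U_2$ is an EGZ sequence; (b) if the terms of $U_1\cdot U_2$ lie in at least two distinct non-central $z$-classes and at least one of $U_1,U_2$ is of thick type, then $U_1\cdot U_2$ is an EGZ sequence; (c) moreover, if $g_1,g_2,g_3,g_4\in G\setminus Z(G)$ and $u\in Z(G)$ are such that $g_1$ and $g_3$ lie in distinct $z$-classes and $g_1g_2,\ g_3g_4\in Z(G)$, then there is a permutation $\sigma$ of $\{1,2,3,4\}$ with $g_{\sigma(1)}g_{\sigma(2)}g_{\sigma(3)}g_{\sigma(4)}u=1$.
   Context: $G$ is the Heisenberg group of order $27$ and exponent $3$; $Z(G)=[G,G]$ has order $3$. For $g\in G\setminus Z(G)$ its $z$-class is $\mathcal{K}[g]=\{g^\lambda u: \lambda\in\{1,2\},\ u\in Z(G)\}=C_G(g)\setminus Z(G)$; there are four non-central $z$-classes. Sequences are finite unordered multisets of elements; $U_1\cdot U_2$ denotes concatenation. A sequence $g_1\cdot\dotsc\cdot g_\ell$ has central product if $g_1\cdots g_\ell\in Z(G)$ (independent of ordering). A short $3$-sequence is a sequence $x_1\cdot x_2\cdot x_3$ with $x_1x_2x_3\in Z(G)$; it is of central type if all $x_i\in Z(G)$; thin type if exactly two terms are non-central; thick type A if all three terms are non-central and pairwise conjugate; thick type B if all three are non-central and it is not thick type A; thick type means thick type A or B. An EGZ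 sequence is a sequence $T$ with central product containing three terms which can be labelled $h_1,h_2,h_3$ so that $h_3$ commutes with none of $h_1$, $h_2$, $h_1h_2$. *)

(* Defs.v *)
From mathcomp Require Import all_boot all_fingroup all_solvable.
Set Implicit Arguments. Unset Strict Implicit. Unset Printing Implicit Defensive.
Import GroupScope.

(* Sequences over G are represented by [seq gT]; all notions below are
   invariant under permutation of the terms, so they are notions on
   (unordered) multisets. *)
Section Defs.
Variable gT : finGroupType.
Variable G : {group gT}.

Definition zclass (g : gT) : {set gT} :=
  [set x in G | [exists u in 'Z(G), (x == g * u) || (x == g ^+ 2 * u)]].

Definition noncentral (x : gT) : bool := x \notin 'Z(G).

Definition zclasses_of (s : seq gT) : {set {set gT}} :=
  [set zclass x | x in [seq y <- s | noncentral y]].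

Definition seq_over (s : seq gT) : bool := all (fun x => x \in G) s.

Definition central_product (s : seq gT) : bool := (\prod_(x <- s) x)%g \in 'Z(G).

Definition short3 (s : seq gT) : bool :=
  [&& size s == 3, seq_over s & central_product s].

Definition central_type (s : seq gT) : bool := all (fun x => x \in 'Z(G)) s.
Definition thin_type (s : seq gT) : bool := count noncentral s == 2.
Definition thickA_type (s : seq gT) : bool :=
  all noncentral s && all (fun x => all (fun y => y \in x ^: G) s) s.
Definition thickB_type (s : seq gT) : bool :=
  all noncentral s && ~~ thickA_type s.
Definition thick_type (s : seq gT) : bool := thickA_type s || thickB_type s.

Definition EGZ (T : seq gT) : Prop :=
  seq_over T /\ central_product T /\
  exists i j k : 'I_(size T),
    [/\ i != j, i != k, j != k &
      let h1 := nth 1 T i in let h2 := nth 1 T j in let h3 := nth 1 T k in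
      [/\ ~ commute h3 h1, ~ commute h3 h2 & ~ commute h3 (h1 * h2)]].
End Defs.

(* Main.v *)
Require Import Defs.
From mathcomp Require Import all_boot all_fingroup all_solvable.
Import GroupScope.
Require Import Defs.
From mathcomp Require Import zify.
Set Implicit Arguments. Unset Strict Implicit. Unset Printing Implicit Defensive.

Lemma prod4 (gT : finGroupType) (L : seq gT) (s : 'S_4) :
  \prod_(i < 4) nth 1 L (s i) =
  nth 1 L (s ord0) * nth 1 L (s (Ordinal (isT : 1 < 4))) *
  nth 1 L (s (Ordinal (isT : 2 < 4))) * nth 1 L (s (Ordinal (isT : 3 < 4))).
Proof.
rewrite !big_ord_recr big_ord0 /=.
by rewrite mul1g; repeat f_equal; apply: val_inj.
Qed.

Lemma tpE (n : nat) (x y z : 'I_n) : tperm x y z = if z == y then x else if z == x then y else z.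
Proof.
case: tpermP => [->|->|/eqP/negPf-> /eqP/negPf->] //; rewrite eqxx //.
by case: eqP.
Qed.

Lemma perm_c (gT : finGroupType) (g1 g2 g3 g4 : gT) :
  (exists s : 'S_4, \prod_(i < 4) nth 1 [:: g1; g2; g3; g4] (s i) = g1 * g2 * g3 * g4) /\
  (exists s : 'S_4, \prod_(i < 4) nth 1 [:: g1; g2; g3; g4] (s i) = g1 * g3 * g2 * g4) /\
  (exists s : 'S_4, \prod_(i < 4) nth 1 [:: g1; g2; g3; g4] (s i) = g2 * g3 * g1 * g4).
Proof.
split; [|split].
- by exists 1; rewrite prod4 !perm1.
- exists (tperm (Ordinal (isT : 1 < 4)) (Ordinal (isT : 2 < 4))).
  by rewrite prod4 !tpE.
- exists (tperm ord0 (Ordinal (isT : 1 < 4)) * tperm ord0 (Ordinal (isT : 2 < 4))).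
  by rewrite prod4 !permM !tpE.
Qed.

Section Basics.
Variables (gT : finGroupType) (G : {group gT}).
Hypotheses (oG : #|G| = 27) (eG : exponent G = 3) (nab : ~~ abelian G).
Local Notation Z := 'Z(G).

Lemma pG : 3.-group G.
Proof. by rewrite /pgroup oG. Qed.

Lemma esG : extraspecial G.
Proof. by apply: p3group_extraspecial pG nab _; rewrite oG. Qed.

Lemma oZ : #|Z| = 3.
Proof. exact: (card_center_extraspecial pG esG). Qed.

Lemma commZ x y : x \in G -> y \in G -> [~ x, y] \in Z.
Proof.
move=> xG yG; have [[_ <-] _] := esG.
by rewrite derg1; apply: mem_commg.
Qed.

Lemma exp3 x : x \in G -> x ^+ 3 = 1.
Proof. by move=> xG; rewrite -eG expg_exponent. Qed.

Lemma ZinG z : z \in Z -> z \in G.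
Proof. by move/(subsetP (center_sub G)). Qed.

Lemma Zcomm z g : z \in Z -> g \in G -> commute z g.
Proof. by move/centerP=> [_ c] gG; exact: c. Qed.

Lemma order3 x : x \in G -> x \notin Z -> #[x] = 3.
Proof.
move=> xG xZ; have : #[x] %| 3 by rewrite order_dvdn exp3.
have x1 : x != 1 by apply: contraNneq xZ => ->; exact: group1.
rewrite -order_eq1 in x1.
move=> d; have := dvdn_leq (isT : 0 < 3) d; move: d x1 (order_gt0 x).
by case: #[x] => [|[|[|[|n]]]].
Qed.

Lemma cardXZ x : x \in G -> x \notin Z -> #|<[x]> * Z| = 9.
Proof.
move=> xG xZ.
have ti : <[x]> :&: Z = 1.
  apply: prime_TIg; first by rewrite -orderE order3.
  by rewrite cycle_subG.
have := mul_cardG <[x]> Z; rewrite ti cards1 muln1 -orderE order3 // oZ.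
by move=> <-.
Qed.

Lemma cent9 x : x \in G -> x \notin Z -> #|'C_G[x]| = 9.
Proof.
move=> xG xZ.
have sub : <[x]> * Z \subset 'C_G[x].
  apply: mul_subG.
    by rewrite cycle_subG inE xG cent1id.
  apply/subsetP=> z zZ; rewrite inE ZinG //; apply/cent1P.
  by apply: Zcomm.
have ge9 := subset_leq_card sub; rewrite cardXZ // in ge9.
have dv : #|'C_G[x]| %| 27 by rewrite -oG cardSg // subsetIl.
have ne : #|'C_G[x]| != 27.
  apply: contraNneq xZ => e.
  have eqC : 'C_G[x] = G.
    apply/eqP; rewrite eqEcard subsetIl e oG leqnn //.
  apply/centerP; split=> // y yG; apply/commute_sym/cent1P.
  by move: yG; rewrite -eqC => /setIP [].
have le := dvdn_leq (isT : 0 < 27) dv.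
move: ge9 dv ne le; move: #|'C_G[x]| => n.
do 28? (case: n => [|n] //).
Qed.

Lemma centE x : x \in G -> x \notin Z -> 'C_G[x] = <[x]> * Z.
Proof.
move=> xG xZ; apply/esym/eqP; rewrite eqEcard cardXZ // cent9 // leqnn andbT.
apply: mul_subG.
  by rewrite cycle_subG inE xG cent1id.
apply/subsetP=> z zZ; rewrite inE ZinG //; apply/cent1P.
by apply: Zcomm.
Qed.

Lemma centAb x : x \in G -> x \notin Z -> abelian 'C_G[x].
Proof. by move=> xG xZ; apply: (@card_p2group_abelian _ 3) => //; rewrite cent9. Qed.

Lemma commT x a b : x \in G -> x \notin Z -> a \in G -> b \in G ->
  commute a x -> commute b x -> commute a b.
Proof.
move=> xG xZ aG bG ax bx; have /centsP c := centAb xG xZ.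
apply: c; rewrite inE ?aG ?bG; apply/cent1P => //.
Qed.

Lemma commE x y : x \in G -> x \notin Z -> y \in G -> commute y x ->
  y \in Z \/ exists2 u, u \in Z & (y = x * u \/ y = x ^+ 2 * u).
Proof.
move=> xG xZ yG yx.
have : y \in 'C_G[x] by rewrite inE yG; apply/cent1P.
rewrite centE // => /mulsgP [w u /cycleP [i ->] uZ ->].
rewrite -expg_mod_order order3 //.
have : i %% 3 < 3 by rewrite ltn_mod.
case: (i %% 3) => [|[|[|n]]] // _.
- by left; rewrite expg0 mul1g.
- by right; exists u => //; left; rewrite expg1.
- by right; exists u => //; right.
Qed.


Lemma exp4 y : y \in G -> y ^+ 4 = y.
Proof. by move=> yG; rewrite (expgD y 3 1) exp3 // mul1g expg1. Qed.

Lemma zsub x y : x \in G -> x \notin Z -> y \in G -> y \notin Z ->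
  commute x y -> zclass G x \subset zclass G y.
Proof.
move=> xG xZ yG yZ xy.
have [|[v vZ ex]] := commE yG yZ xG xy; first by rewrite (negbTE xZ).
apply/subsetP=> w; rewrite !inE => /andP [wG /existsP [u /andP [uZ /orP hw]]].
rewrite wG /=; have vG := ZinG vZ; have uG := ZinG uZ.
case: ex => -> in hw; case: hw => /eqP ->.
- apply/existsP; exists (v * u); by rewrite groupM //= mulgA eqxx.
- apply/existsP; exists (v ^+ 2 * u); rewrite groupM ?groupX //=.
  by rewrite expgMn; [rewrite !mulgA eqxx orbT | apply/commute_sym/Zcomm].
- apply/existsP; exists (v * u); by rewrite groupM //= !mulgA eqxx orbT.
- apply/existsP; exists (v ^+ 2 * u); rewrite groupM ?groupX //=.
  rewrite expgMn; last by apply/commute_sym/Zcomm; rewrite ?groupX.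
  by rewrite -expgM !mulgA exp4 // eqxx.
Qed.

Lemma zclass_eq x y : x \in G -> x \notin Z -> y \in G -> y \notin Z ->
  commute x y -> zclass G x = zclass G y.
Proof.
move=> xG xZ yG yZ xy; apply/eqP; rewrite eqEsubset !zsub //.
Qed.

Lemma zclass_nc x y : x \in G -> x \notin Z -> y \in G -> y \notin Z ->
  zclass G x != zclass G y -> ~ commute x y.
Proof. by move=> xG xZ yG yZ /eqP ne xy; apply: ne; apply: zclass_eq. Qed.


Lemma cZ x c : x \in G -> c \in Z -> commute x c.
Proof. by move=> xG cZ; apply/commute_sym/Zcomm. Qed.

Lemma cstrip x y c : x \in G -> y \in G -> c \in Z -> commute x (y * c) -> commute x y.
Proof.
move=> xG yG hc h.
have -> : y = (y * c) * c^-1 by rewrite mulgK.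
by apply: commuteM => //; apply: commuteV; apply: cZ.
Qed.

Lemma csq x y : x \in G -> y \in G -> commute x (y ^+ 2) -> commute x y.
Proof. by move=> xG yG /(commuteX 2); rewrite -expgM exp4. Qed.

Inductive thick3 (a b c : gT) : Prop :=
  Thick3 of a \in G & b \in G & c \in G & a \notin Z & b \notin Z & c \notin Z & a * b * c \in Z.

Definition good (h1 h2 h3 : gT) :=
  [/\ ~ commute h3 h1, ~ commute h3 h2 & ~ commute h3 (h1 * h2)].

Lemma thick_rot a b c : thick3 a b c -> thick3 b c a.
Proof.
case=> aG bG cG aZ bZ cZ' w; split=> //.
have -> : b * c * a = a^-1 * (a * b * c) * a by rewrite !mulgA mulVg mul1g.
by rewrite -mulgA (Zcomm w aG) mulgA mulVg mul1g.
Qed.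

Lemma thick_c (a b c : gT) : c = (a * b)^-1 * (a * b * c).
Proof. by rewrite mulKg. Qed.

Lemma thick_abZ a b c : thick3 a b c -> a * b \notin Z.
Proof.
case=> aG bG cG aZ bZ cZ' w; apply: contra cZ' => abZ.
by rewrite (thick_c a b c) groupM ?groupV.
Qed.

Lemma thick_cab a b c : thick3 a b c -> commute (a * b) c.
Proof.
case=> aG bG cG aZ bZ cZ' w; rewrite (thick_c a b c).
apply: commuteM; first exact/commuteV/commute_refl.
by apply: cZ => //; rewrite groupM.
Qed.

Lemma thick_comm_rot a b c : thick3 a b c -> commute a b -> commute b c.
Proof.
move=> t ab; have [aG bG cG aZ bZ cZ' w] := t; rewrite (thick_c a b c).
apply: commuteM; last by apply: cZ.
by apply: commuteV; apply: commuteM; [exact/commute_sym | exact: commute_refl].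
Qed.

Lemma nc_rot a b c : thick3 a b c -> ~ commute a b -> ~ commute b c.
Proof.
move=> t nab' bc; apply: nab'.
have t2 := thick_rot t; have t3 := thick_rot t2.
exact: (thick_comm_rot t3 (thick_comm_rot t2 bc)).
Qed.

Lemma goodA a b c d : thick3 a b c -> commute a b -> d \in G ->
  ~ commute d a -> good a b d.
Proof.
move=> t ab dG da; have [aG bG cG aZ bZ cZ' w] := t; split=> // h.
  by apply: da; apply: (commT bG bZ dG aG h).
apply: da; apply: (commT (groupM aG bG) (thick_abZ t) dG aG h).
by apply: commuteM => //; exact: commute_refl.
Qed.

Lemma caseA a b c x y : thick3 a b c -> commute a b -> x \in G -> y \in G ->
  ~ commute x y -> good a b x \/ good a b y.
Proof.
move=> t ab xG yG xy; have [aG bG cG aZ bZ cZ' w] := t.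
have [xa|xa] := eqVneq (x * a) (a * x); last first.
  by left; apply: (goodA t ab xG) => h; rewrite h eqxx in xa.
right; apply: (goodA t ab yG) => ya; apply: xy.
exact: (commT aG aZ xG yG xa ya).
Qed.

Lemma caseB_none a b c d : thick3 a b c -> d \in G ->
  ~ commute d a -> ~ commute d b -> ~ commute d c -> good a b d.
Proof.
move=> t dG da db dc; have [aG bG cG aZ bZ cZ' w] := t; split=> // h.
apply: dc; apply: (commT (groupM aG bG) (thick_abZ t) dG cG h).
exact/commute_sym/thick_cab.
Qed.

Lemma caseB_a a b c d : thick3 a b c -> ~ commute a b -> d \in G -> d \notin Z ->
  commute d a -> good a d b \/ good b d c.
Proof.
move=> t nab' dG dZ da; have [aG bG cG aZ bZ cZ' w] := t.
have nba : ~ commute b a by move/commute_sym.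
have nbc := nc_rot t nab'.
have nca := nc_rot (thick_rot t) nbc.
have [|[u uZ [e|e]]] := commE aG aZ dG da; first by rewrite (negbTE dZ).
- left; rewrite e; split=> // h.
    by apply: nba; apply: (cstrip bG aG uZ h).
  apply: nba; rewrite mulgA in h; have := cstrip bG (groupM aG aG) uZ h.
  by move=> h2; apply: (csq bG aG); rewrite expgS expg1.
- right; rewrite e; split=> //.
  + by move/commute_sym.
  + by move=> h; apply: nca; apply: csq => //; apply: (cstrip cG (groupX 2 aG) uZ h).
  move=> h; rewrite mulgA in h; have := cstrip cG (groupM bG (groupX 2 aG)) uZ h.
  rewrite (thick_c a b c) => h2; apply: nab'.
  have h3 : commute (b * a ^+ 2) (a * b).
    have abiG : (a * b)^-1 \in G by rewrite groupV groupM.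
    have := commute_sym h2.
    move/(cstrip (groupM bG (groupX 2 aG)) abiG w)/commuteV.
    by rewrite invgK.
  have h4 : commute (a * b) (b * a ^+ 2 * (a * b)).
    by apply: commuteM; [exact/commute_sym | exact: commute_refl].
  have e2 : b * a ^+ 2 * (a * b) = b ^+ 2.
    have a3 : a ^+ 2 * a = 1 by rewrite -expgSr exp3.
    by rewrite mulgA -(mulgA b (a ^+ 2) a) a3 mulg1 expgS expg1.
  rewrite e2 in h4; have h5 := csq (groupM aG bG) bG h4.
  have -> : a = (a * b) * b^-1 by rewrite mulgK.
  apply/commute_sym; apply: commuteM; first exact/commute_sym.
  exact/commuteV/commute_refl.
Qed.


Lemma egzI T i j k : seq_over G T -> central_product G T ->
  i < size T -> j < size T -> k < size T -> i != j ->
  good (nth 1 T i) (nth 1 T j) (nth 1 T k) -> EGZ G T.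
Proof.
move=> sT cT hi hj hk ij [g1 g2 g3]; split=> //; split=> //.
exists (Ordinal hi), (Ordinal hj), (Ordinal hk); split => //=.
- by apply/negP => /eqP [e]; apply: g1; rewrite e; exact: commute_refl.
- by apply/negP => /eqP [e]; apply: g2; rewrite e; exact: commute_refl.
Qed.

Lemma nthG T p : seq_over G T -> p < size T -> nth 1 T p \in G.
Proof. by move=> sT hp; apply: (allP sT); apply: mem_nth. Qed.

Lemma egz_thick T o p : seq_over G T -> central_product G T ->
  o.+2 < size T -> p < size T -> p != o -> p != o.+1 -> p != o.+2 ->
  thick3 (nth 1 T o) (nth 1 T o.+1) (nth 1 T o.+2) -> nth 1 T p \notin Z ->
  (exists x y, [/\ x \in T, y \in T & ~ commute x y]) -> EGZ G T.
Proof.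
move=> sT cT ho hp po po1 po2 t dZ [x [y [xT yT xy]]].
have ho1 : o.+1 < size T by apply: ltn_trans ho.
have ho0 : o < size T by apply: ltn_trans ho1.
have dG := nthG sT hp.
have ne1 : o != o.+1 by apply/eqP; lia.
have [ab|nab'] := eqVneq (nth 1 T o * nth 1 T o.+1) (nth 1 T o.+1 * nth 1 T o).
  have xG : x \in G by apply: (allP sT).
  have yG : y \in G by apply: (allP sT).
  have [g|g] := caseA t ab xG yG xy.
    apply: (egzI sT cT ho0 ho1 (_ : index x T < size T) ne1); first by rewrite index_mem.
    by rewrite nth_index.
  apply: (egzI sT cT ho0 ho1 (_ : index y T < size T) ne1); first by rewrite index_mem.
  by rewrite nth_index.
have nab2 : ~ commute (nth 1 T o) (nth 1 T o.+1) by move=> h; rewrite h eqxx in nab'.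
have t2 := thick_rot t; have t3 := thick_rot t2.
have nbc := nc_rot t nab2; have nca := nc_rot t2 nbc.
have ne2 : o.+1 != o.+2 by apply/eqP; lia.
have ne3 : o.+2 != o by apply/eqP; lia.
set a := nth 1 T o in t t2 t3 nab2 nca nab'; set b := nth 1 T o.+1 in t t2 t3 nab2 nbc nab';
set c := nth 1 T o.+2 in t t2 t3 nbc nca; set d := nth 1 T p in dG dZ.
have [da|da] := eqVneq (d * a) (a * d).
  have [g|g] := caseB_a t nab2 dG dZ da.
    by apply: (egzI sT cT ho0 hp ho1 _ g); rewrite eq_sym.
  by apply: (egzI sT cT ho1 hp ho _ g); rewrite eq_sym.
have [db|db] := eqVneq (d * b) (b * d).
  have [g|g] := caseB_a t2 nbc dG dZ db.
    by apply: (egzI sT cT ho1 hp ho _ g); rewrite eq_sym.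
  by apply: (egzI sT cT ho hp ho0 _ g); rewrite eq_sym.
have [dc|dc] := eqVneq (d * c) (c * d).
  have [g|g] := caseB_a t3 nca dG dZ dc.
    by apply: (egzI sT cT ho hp ho0 _ g); rewrite eq_sym.
  by apply: (egzI sT cT ho0 hp ho1 _ g); rewrite eq_sym.
apply: (egzI sT cT ho0 ho1 hp ne1).
by apply: (caseB_none t dG) => h; [rewrite h eqxx in da | rewrite h eqxx in db | rewrite h eqxx in dc].
Qed.


Lemma ncZ x y : x \in G -> ~ commute x y -> x * y \notin Z.
Proof.
move=> xG nxy; apply/negP => w; apply: nxy.
have -> : y = x^-1 * (x * y) by rewrite mulKg.
by apply: commuteM; [exact/commuteV/commute_refl | apply: cZ].
Qed.

Lemma egz4 T p1 p2 p3 p4 : seq_over G T -> central_product G T ->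
  p1 \in T -> p2 \in T -> p3 \in T -> p4 \in T ->
  ~ commute p1 p2 -> ~ commute p1 p3 -> ~ commute p1 p4 ->
  ~ commute p2 p3 -> ~ commute p2 p4 -> ~ commute p3 p4 -> EGZ G T.
Proof.
move=> sT cT i1 i2 i3 i4 n12 n13 n14 n23 n24 n34.
have [g1 g2 g3 g4] : [/\ p1 \in G, p2 \in G, p3 \in G & p4 \in G].
  by split; apply: (allP sT).
have ne : index p1 T != index p2 T.
  apply/negP => /eqP e; apply: n12.
  by rewrite -(nth_index 1 i1) -(nth_index 1 i2) e; exact: commute_refl.
have s1 : index p1 T < size T by rewrite index_mem.
have s2 : index p2 T < size T by rewrite index_mem.
have s3 : index p3 T < size T by rewrite index_mem.
have s4 : index p4 T < size T by rewrite index_mem.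
have n12Z := ncZ g1 n12.
have [c3|c3] := eqVneq (p3 * (p1 * p2)) ((p1 * p2) * p3).
  apply: (egzI sT cT s1 s2 s4 ne); rewrite !nth_index //; split.
  - by move/commute_sym.
  - by move/commute_sym.
  move=> c4; apply: n34; apply: (commT (groupM g1 g2) n12Z g3 g4 c3 c4).
apply: (egzI sT cT s1 s2 s3 ne); rewrite !nth_index //; split.
- by move/commute_sym.
- by move/commute_sym.
by move=> h; rewrite h eqxx in c3.
Qed.

Lemma zc_mem T X : X \in zclasses_of G T ->
  exists x, [/\ x \in T, x \notin Z & X = zclass G x].
Proof.
by case/imsetP => x; rewrite mem_filter => /andP [nx xT] e; exists x.
Qed.

Lemma zc2 T : seq_over G T -> 1 < #|zclasses_of G T| ->
  exists x y, [/\ x \in T, y \in T & ~ commute x y].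
Proof.
move=> sT /card_gt1P [X [Y [hX hY ne]]].
have [x [xT xZ eX]] := zc_mem hX; have [y [yT yZ eY]] := zc_mem hY.
exists x, y; split=> //; apply: zclass_nc => //; try by apply: (allP sT).
by rewrite -eX -eY.
Qed.


Lemma zc4 T : seq_over G T -> #|zclasses_of G T| = 4 ->
  exists p1 p2 p3 p4, [/\ [/\ p1 \in T, p2 \in T, p3 \in T & p4 \in T],
    [/\ ~ commute p1 p2, ~ commute p1 p3 & ~ commute p1 p4] &
    [/\ ~ commute p2 p3, ~ commute p2 p4 & ~ commute p3 p4]].
Proof.
move=> sT h4; set S := zclasses_of G T in h4.
have hs : size (enum S) = 4 by rewrite -cardE h4.
have hu := enum_uniq S.
have hm : forall X, X \in enum S -> X \in S by move=> X; rewrite mem_enum.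
move: hs hu hm; case: (enum S) => [|X1 [|X2 [|X3 [|X4 [|? ?]]]]] //= _.
rewrite !inE !negb_or => /and4P [/and3P [n12 n13 n14] /andP [n23 n24] n34 _] hm.
have hX1 : X1 \in S by apply: hm; rewrite !inE eqxx ?orbT.
have [x1 [x1T x1Z e1]] := zc_mem hX1.
have hX2 : X2 \in S by apply: hm; rewrite !inE eqxx ?orbT.
have [x2 [x2T x2Z e2]] := zc_mem hX2.
have hX3 : X3 \in S by apply: hm; rewrite !inE eqxx ?orbT.
have [x3 [x3T x3Z e3]] := zc_mem hX3.
have hX4 : X4 \in S by apply: hm; rewrite !inE eqxx ?orbT.
have [x4 [x4T x4Z e4]] := zc_mem hX4.
have G1 : x1 \in G by apply: (allP sT).
have G2 : x2 \in G by apply: (allP sT).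
have G3 : x3 \in G by apply: (allP sT).
have G4 : x4 \in G by apply: (allP sT).
subst X1 X2 X3 X4.
exists x1, x2, x3, x4; split; split=> //; apply: zclass_nc => //.
Qed.


Lemma part_c g1 g2 g3 g4 u : g1 \in G -> g2 \in G -> g3 \in G -> g4 \in G ->
  u \in Z -> ~ commute g1 g3 -> g1 * g2 \in Z -> g3 * g4 \in Z ->
  u^-1 \in [:: g1 * g2 * g3 * g4; g1 * g3 * g2 * g4; g2 * g3 * g1 * g4].
Proof.
move=> G1 G2 G3 G4 uZ n13 w1 w2.
set P0 := g1 * g2 * g3 * g4; set P1 := g1 * g3 * g2 * g4; set P2 := g2 * g3 * g1 * g4.
have e2 : g2 = g1^-1 * (g1 * g2) by rewrite mulKg.
have c12 : g2 * g1 = g1 * g2.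
  have := commuteM (commuteV (commute_refl g1)) (cZ G1 w1).
  by rewrite mulKg => ->.
have [k kZ ek] : exists2 k, k \in Z & g3 * g2 = g2 * g3 * k.
  by exists [~ g3, g2]; [apply: commZ | apply: commgC].
have [k' k'Z ek'] : exists2 k, k \in Z & g3 * g1 = g1 * g3 * k.
  by exists [~ g3, g1]; [apply: commZ | apply: commgC].
have P0Z : P0 \in Z by rewrite /P0 -mulgA groupM.
have P1Z : P1 \in Z.
  rewrite /P1 -(mulgA g1) ek !mulgA -(mulgA _ k g4) (Zcomm kZ G4) mulgA.
  by rewrite groupM.
have P2Z : P2 \in Z.
  rewrite /P2 -(mulgA g2) ek' !mulgA -(mulgA _ k' g4) (Zcomm k'Z G4) mulgA.
  by rewrite c12 groupM.
have n01 : P0 != P1.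
  apply/eqP => /mulIg; rewrite -!mulgA => /mulgI e; apply: n13.
  have c23 : commute g2 g3 by [].
  have : commute g3 (g1^-1 * (g1 * g2)) by rewrite -e2; exact/commute_sym.
  move/(cstrip G3 (groupVr G1) w1)/commuteV; rewrite invgK.
  exact: commute_sym.
have n02 : P0 != P2.
  apply/eqP => /mulIg; rewrite -c12 -!mulgA => /mulgI e; apply: n13; exact: e.
have n12 : P1 != P2.
  apply/eqP => /mulIg e; apply: n13; apply: commute_sym.
  apply: (csq G3 G1).
  have h1 : g1 * (g1 * g3 * g2) * g1 = g1 * g1 * g3 * (g1 * g2).
    by rewrite -c12 !mulgA.
  rewrite e in h1.
  have h2 : g1 * (g2 * g3 * g1) * g1 = (g1 * g2) * g3 * g1 * g1 by rewrite !mulgA.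
  rewrite h2 -!(mulgA (g1 * g2)) (Zcomm w1 (groupM (groupM G3 G1) G1)) in h1.
  by move/mulIg: h1; rewrite /commute expgS expg1 mulgA.
apply: contraT => nin.
have : size [:: u^-1; P0; P1; P2] <= size (enum Z).
  apply: uniq_leq_size.
    rewrite /= !inE !negb_or n01 n02 n12 !andbT /=.
    by move: nin; rewrite !inE !negb_or.
  by move=> x; rewrite mem_enum !in_cons in_nil orbF => /or4P [] /eqP ->; rewrite ?groupV.
by rewrite -cardE oZ.
Qed.


Lemma short3_cat U1 U2 : short3 G U1 -> short3 G U2 ->
  seq_over G (U1 ++ U2) /\ central_product G (U1 ++ U2).
Proof.
case/and3P=> _ s1 c1; case/and3P=> _ s2 c2; split.
  by rewrite /seq_over all_cat; apply/andP.
by rewrite /central_product big_cat groupM.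
Qed.

Lemma thick_of a b c : seq_over G [:: a; b; c] -> central_product G [:: a; b; c] ->
  thick_type G [:: a; b; c] -> thick3 a b c.
Proof.
rewrite /seq_over /central_product /thick_type /thickB_type /thickA_type /=.
rewrite !big_cons big_nil mulg1 !andbT mulgA => /and3P [aG bG cG] w th.
have : [&& noncentral G a, noncentral G b & noncentral G c].
  by case/orP: th => /andP [].
by case/and3P => aZ bZ cZ'; split.
Qed.

End Basics.
Theorem lemma3p4 (gT : finGroupType) (G : {group gT}) :
  #|G| = 27 -> exponent G = 3 -> ~~ abelian G ->
  [/\ (* (a) *)
      (forall U1 U2 : seq gT,
         short3 G U1 -> short3 G U2 ->
         ~~ central_type G U1 -> ~~ central_type G U2 ->
         #|zclasses_of G (U1 ++ U2)| = 4 ->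
         EGZ G (U1 ++ U2)),
      (* (b) *)
      (forall U1 U2 : seq gT,
         short3 G U1 -> short3 G U2 ->
         ~~ central_type G U1 -> ~~ central_type G U2 ->
         2 <= #|zclasses_of G (U1 ++ U2)| ->
         thick_type G U1 || thick_type G U2 ->
         EGZ G (U1 ++ U2)) &
      (* (c) *)
      (forall g1 g2 g3 g4 u : gT,
         g1 \in G :\: 'Z(G) -> g2 \in G :\: 'Z(G) ->
         g3 \in G :\: 'Z(G) -> g4 \in G :\: 'Z(G) -> u \in 'Z(G) ->
         zclass G g1 != zclass G g3 ->
         g1 * g2 \in 'Z(G) -> g3 * g4 \in 'Z(G) ->
         exists s : 'S_4,
           (\prod_(i < 4) nth 1 [:: g1; g2; g3; g4] (s i)) * u = 1)].
Proof.
move=> oG eG nab; split.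
- move=> U1 U2 h1 h2 _ _ h4.
  have [sT cT] := short3_cat h1 h2.
  have [p1 [p2 [p3 [p4 [[i1 i2 i3 i4] [n12 n13 n14] [n23 n24 n34]]]]]] :=
    zc4 oG eG nab sT h4.
  exact: (egz4 oG eG nab sT cT i1 i2 i3 i4).
- move=> U1 U2 h1 h2 nc1 nc2 hz th.
  have [sT cT] := short3_cat h1 h2.
  have [x [y [xT yT xy]]] := zc2 oG eG nab sT hz.
  have sz1 : size U1 = 3 by case/and3P: h1 => /eqP.
  have sz2 : size U2 = 3 by case/and3P: h2 => /eqP.
  have [_ s1 c1] := and3P h1; have [_ s2 c2] := and3P h2.
  clear h1 h2 hz; move: sz1 sz2 s1 c1 s2 c2 nc1 nc2 th sT cT xT yT.
  case: U1 => [|a [|b [|c [|? ?]]]] //; case: U2 => [|d [|e [|f [|? ?]]]] //= _ _.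
  move=> s1 c1 s2 c2 nc1 nc2 th sT cT xT yT.
  have ex : exists x y, [/\ x \in [:: a; b; c; d; e; f],
                            y \in [:: a; b; c; d; e; f] & ~ commute x y].
    by exists x, y.
  case/orP: th => th.
    have t := thick_of s1 c1 th.
    rewrite /central_type /= !andbT in nc2.
    case: (boolP (d \in 'Z(G))) nc2 => dZ nc2.
      case: (boolP (e \in 'Z(G))) nc2 => eZ nc2.
        case: (boolP (f \in 'Z(G))) nc2 => fZ nc2 //.
        by apply: (@egz_thick _ _ oG eG nab _ 0 5).
      by apply: (@egz_thick _ _ oG eG nab _ 0 4).
    by apply: (@egz_thick _ _ oG eG nab _ 0 3).
  have t := thick_of s2 c2 th.
  rewrite /central_type /= !andbT in nc1.
  case: (boolP (a \in 'Z(G))) nc1 => aZ nc1.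
    case: (boolP (b \in 'Z(G))) nc1 => bZ nc1.
      case: (boolP (c \in 'Z(G))) nc1 => cZ' nc1 //.
      by apply: (@egz_thick _ _ oG eG nab _ 3 2).
    by apply: (@egz_thick _ _ oG eG nab _ 3 1).
  by apply: (@egz_thick _ _ oG eG nab _ 3 0).
- move=> g1 g2 g3 g4 u /setDP [G1 Z1] /setDP [G2 Z2] /setDP [G3 Z3] /setDP [G4 Z4].
  move=> uZ ne w1 w2.
  have n13 := zclass_nc oG eG nab G1 Z1 G3 Z3 ne.
  have := part_c oG eG nab G1 G2 G3 G4 uZ n13 w1 w2.
  have [[s0 e0] [[s1 e1] [s2 e2]]] := perm_c g1 g2 g3 g4.
  rewrite !in_cons in_nil orbF => /or3P [] /eqP ei.
  + by exists s0; rewrite e0 -ei mulVg.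
  + by exists s1; rewrite e1 -ei mulVg.
  + by exists s2; rewrite e2 -ei mulVg.
Qed.
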